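(* Let $q\geq3$, $\Delta\geq3$ and $0\leq B<\frac{\Delta-q}{\Delta}$. For the antiferromagnetic $q$-state Potts model with parameter $B$, the global maximum of $\Psi_1$ is not achieved at the translation invariant fixpoint, i.e., not at $\boldsymbol{\alpha}=\boldsymbol{\beta}=(1/q,\dots,1/q)$.
   Context: The Potts model with parameter $B$ has interaction matrix $\mathbf{B}$ with diagonal entries $B$ and off-diagonal entries $1$. $\Psi_1$ is defined on pairs of probability vectors by $\Psi_1(\boldsymbol{\alpha},\boldsymbol{\beta})=\max_{\mathbf{x}}[(\Delta-1)(\sum_i\alpha_i\ln\alpha_i+\sum_j\beta_j\ln\beta_j)+\Delta\sum_{i,j}x_{ij}(\ln B_{ij}-\ln x_{ij})]$ over nonnegative $\mathbf{x}\in\mathbb{R}^{q\times q}$ with row sums $\alpha_i$ and column sums $\beta_j$ (conventions $\ln0=-\infty$, $0\ln0=0$); it is the exponential growth rate of the expected weight of configurations with spin frequencies $\boldsymbol{\alpha},\boldsymbol{\beta}$ on the two sides of a random $\Delta$-regular bipartite graph. The translation invariant fixpoint of the Potts tree recursions $R_i\propto(BC_i+\sum_{j\neq i}C_j)^{\Delta-1}$, $C_j\propto(BR_j+\sum_{i\neq j}R_i)^{\Delta-1}$ is the one with all $R_i$ equal and all $C_j$ equal, corresponding to $\boldsymbol{\alpha}=\boldsymbol{\beta}=(1/q,\dots,1/q)$. *)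

(* Defs.v *)
From mathcomp Require Import all_boot all_order all_algebra.
From mathcomp Require Import all_classical all_reals all_analysis.
Set Implicit Arguments. Unset Strict Implicit. Unset Printing Implicit Defensive.
Import Order.TTheory GRing.Theory Num.Theory.
Local Open Scope ring_scope.
Local Open Scope classical_set_scope.

Section Potts.
Variable R : realType.

Definition potts_mx (q : nat) (B : R) : 'M[R]_q :=
  \matrix_(i, j) if i == j then B else 1.

Definition is_prob (q : nat) (a : 'I_q -> R) : Prop :=
  (forall i, 0 <= a i) /\ \sum_i a i = 1.

Definition unif (q : nat) : 'I_q -> R := fun _ => (q%:R)^-1.

Definition couplings (q : nat) (a b : 'I_q -> R) : set 'M[R]_q :=
  [set x | (forall i j, 0 <= x i j) /\ (forall i, \sum_j x i j = a i)
                                    /\ (forall j, \sum_i x i j = b j)].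

Definition xlog_term (b x : R) : \bar R :=
  if x == 0 then 0%E
  else if b == 0 then -oo%E
  else (x * (ln b - ln x))%:E.

Definition negent (q : nat) (a : 'I_q -> R) : R :=
  \sum_i (if a i == 0 then 0 else a i * ln (a i)).

Definition Psi1_obj (q Delta : nat) (B : R) (a b : 'I_q -> R) (x : 'M[R]_q)
  : \bar R :=
  (((Delta%:R - 1) * (negent a + negent b))%:E
   + (Delta%:R)%:E * \sum_i \sum_j xlog_term (potts_mx q B i j) (x i j))%E.

Definition Psi1 (q Delta : nat) (B : R) (a b : 'I_q -> R) : \bar R :=
  ereal_sup [set Psi1_obj Delta B a b x | x in couplings a b].

End Potts.

(* Main.v *)
Require Import Defs.
From mathcomp Require Import all_boot all_order all_algebra.
From mathcomp Require Import all_classical all_reals all_analysis.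
From mathcomp Require Import ring lra.
Import Order.TTheory GRing.Theory Num.Theory.
Import numFieldNormedType.Exports.
Local Open Scope ring_scope.
Section S. Variable R : realType.
Lemma mvt_sign (f df : R -> R) (a b : R) : 0 < a ->
 (forall t : R, 0 < t -> is_derive t 1 f (df t)) ->
 (forall t : R, a <= t <= 1 -> df t <= 0) -> (forall t : R, 1 <= t <= b -> 0 <= df t) ->
 forall y : R, a <= y <= b -> f 1 <= f y.
Proof.
move=> a0 hd hneg hpos y /andP[ay yb].
have cont : forall u v : R, 0 < u -> {within [set` (`[u, v]%R : interval R)], continuous f}%classic.
  move=> u v u0; apply: derivable_within_continuous => x.
  rewrite in_itv /= => /andP[ux _]; apply: ex_derive; apply: hd.
  exact: (lt_le_trans u0 ux).
have [y1|y1] := leP 1 y.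
  have [c|c cin H] := @MVT_segment R f df 1 y y1 _ (cont 1 y ltr01).
    rewrite in_itv /= => /andP[c1 _]; apply: hd; exact: (lt_trans ltr01 c1).
  rewrite -subr_ge0 H mulr_ge0 ?subr_ge0 // hpos //.
  by move: cin; rewrite in_itv /= => /andP[-> /le_trans ->].
have y0 : 0 < y by exact: (lt_le_trans a0 ay).
have [c|c cin] := @MVT_segment R f df y 1 (ltW y1) _ (cont y 1 y0).
  rewrite in_itv /= => /andP[c1 _]; apply: hd; exact: (lt_trans y0 c1).
move=> H; rewrite -subr_ge0 -opprB H oppr_ge0 mulr_le0_ge0 ?subr_ge0 ?(ltW y1)// hneg //.
by move: cin; rewrite in_itv /= => /andP[/(le_trans ay) -> ->].
Qed.
Lemma ln_le_sub1 (t : R) : 0 < t -> ln t <= t - 1.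
Proof.
move=> t0; have := @le_ln1Dx R (t - 1).
rewrite [1 + _]addrC subrK; apply; lra.
Qed.

Lemma ln_ge_inv (t : R) : 0 < t -> 1 - t^-1 <= ln t.
Proof.
move=> t0; have ti : 0 < t^-1 by rewrite invr_gt0.
have := ln_le_sub1 _ ti.
rewrite lnV ?posrE //; move: (t^-1) (ln t) => u l H; clear -H; lra.
Qed.

Lemma d1 (k t : R) : 0 < t -> k != 0 -> is_derive t 1 (fun t : R => t * ln t - (t - 1) - (t-1)^+2 / k) (ln t - 2 * (t - 1) / k).
Proof.
move=> t0 k0.
have H := is_derive1_ln t0. apply: is_derive_eq.
rewrite /GRing.scale /=.
have t0' : t != 0 by rewrite gt_eqF.
field. by rewrite k0 t0'.
Qed.

Lemma d2 (k t : R) : 0 < t -> k != 0 -> is_derive t 1 (fun t : R => (t-1)^+2 / k + (t - 1) - t * ln t) (2 * (t - 1) / k - ln t).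
Proof.
move=> t0 k0.
have H := is_derive1_ln t0. apply: is_derive_eq.
rewrite /GRing.scale /=.
have t0' : t != 0 by rewrite gt_eqF.
field. by rewrite k0 t0'.
Qed.

Lemma L1 (a w : R) : a <= 0 -> w <= 1 -> a <= a * w.
Proof. move=> a0 w1; nra. Qed.
Lemma L2 (a w : R) : 0 <= a -> 1 <= w -> a <= a * w.
Proof. move=> a0 w1; nra. Qed.
Lemma Linv (t : R) : 0 < t -> 1 - t^-1 = (t - 1) * t^-1.
Proof. by move=> t0; rewrite mulrBl mul1r mulfV ?gt_eqF. Qed.
Lemma L2k (t e : R) : 0 < 1 + e -> 2 * (t - 1) / (2 * (1 + e)) = (t - 1) * (1 + e)^-1.
Proof. by move=> h; field; rewrite gt_eqF. Qed.
Lemma L2k' (t e : R) : 0 < 1 - e -> 2 * (t - 1) / (2 * (1 - e)) = (t - 1) * (1 - e)^-1.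
Proof. by move=> h; field; rewrite gt_eqF. Qed.

Lemma hlow (e y : R) : 0 <= e < 1 -> 1 - e <= y <= 1 + e ->
  (y-1) + (y-1)^+2/(2*(1+e)) <= y * ln y.
Proof.
move=> /andP[e0 e1] hy.
have k0 : 0 < 1 + e by lra.
pose F := (fun t : R => t * ln t - (t - 1) - (t-1)^+2 / (2 * (1 + e))).
have H : F 1 <= F y.
  apply: (@mvt_sign F (fun t => ln t - 2 * (t - 1) / (2 * (1 + e))) (1 - e) (1 + e)); last exact: hy.
  - lra.
  - by move=> t t0; apply: d1 => //; rewrite gt_eqF //; lra.
  - move=> t /andP[t1 t2].
    have t0 : 0 < t by lra.
    have := ln_le_sub1 _ t0.
    rewrite L2k //.
    have : t - 1 <= (t - 1) * (1 + e)^-1.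
      apply: L1; first lra. by rewrite invr_le1 ?unitfE ?gt_eqF //; lra.
    lra.
  - move=> t /andP[t1 t2].
    have t0 : 0 < t by lra.
    have := ln_ge_inv _ t0.
    rewrite L2k // Linv //.
    have : (t - 1) * (1 + e)^-1 <= (t - 1) * t^-1.
      apply: ler_wpM2l; first lra. by rewrite lef_pV2 ?posrE //; lra.
    lra.
move: H; rewrite /F /= ln1 mulr0 subrr expr0n /= mul0r.
lra.
Qed.

Lemma hupp (e y : R) : 0 <= e < 1 -> 1 - e <= y <= 1 + e ->
  y * ln y <= (y-1) + (y-1)^+2/(2*(1-e)).
Proof.
move=> /andP[e0 e1] hy.
have k0 : 0 < 1 - e by lra.
pose F := (fun t : R => (t-1)^+2 / (2 * (1 - e)) + (t - 1) - t * ln t).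
have H : F 1 <= F y.
  apply: (@mvt_sign F (fun t => 2 * (t - 1) / (2 * (1 - e)) - ln t) (1 - e) (1 + e)); last exact: hy.
  - exact: k0.
  - by move=> t t0; apply: d2 => //; rewrite gt_eqF //; lra.
  - move=> t /andP[t1 t2].
    have t0 : 0 < t by lra.
    have := ln_ge_inv _ t0.
    rewrite L2k' // Linv //.
    have : (t - 1) * (1 - e)^-1 <= (t - 1) * t^-1.
      have hi : t^-1 <= (1 - e)^-1 by rewrite lef_pV2 ?posrE //; lra.
      have ht : t - 1 <= 0 by lra.
      exact: (ler_wnM2l ht hi).
    lra.
  - move=> t /andP[t1 t2].
    have t0 : 0 < t by lra.
    have := ln_le_sub1 _ t0.
    rewrite L2k' //.
    have : t - 1 <= (t - 1) * (1 - e)^-1.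
      apply: L2; first lra. by rewrite invf_ge1 //; lra.
    lra.
move: H; rewrite /F /= ln1 mulr0 subrr expr0n /= mul0r.
lra.
Qed.
Section Sums.
Variable q : nat.
Implicit Types s : 'I_q -> R.

Lemma sum_delta (i0 : 'I_q) : \sum_(i < q) (i == i0)%:R = 1 :> R.
Proof.
rewrite (bigD1 i0) //= eqxx big1 ?addr0 // => i /negbTE ->; done.
Qed.

Lemma sum_deltaL (i0 : 'I_q) (f : 'I_q -> R) : \sum_(j < q) ((i0 == j)%:R * f j) = f i0.
Proof.
rewrite (bigD1 i0) //= eqxx mul1r big1 ?addr0 // => j ji.
by rewrite eq_sym (negbTE ji) mul0r.
Qed.

Lemma sum_cst (c : R) : \sum_(i < q) c = q%:R * c.
Proof. by rewrite sumr_const card_ord mulr_natl. Qed.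

Lemma sumd s : \sum_i s i = 0 -> \sum_i \sum_j (s i - s j) = 0.
Proof.
move=> h; under eq_bigr => i _ do rewrite sumrB sum_cst h subr0.
by rewrite -mulr_sumr h mulr0.
Qed.

Lemma sumd2 s : \sum_i s i = 0 ->
  \sum_i \sum_j (s i - s j)^+2 = 2 * q%:R * \sum_i s i ^+ 2.
Proof.
move=> h.
have E (u v : R) : (u - v)^+2 = (u^+2 + v^+2) - 2 * u * v by ring.
under eq_bigr => i _.
  under eq_bigr => j _ do rewrite E.
  rewrite sumrB big_split /= sum_cst -mulr_sumr h mulr0 subr0.
  over.
rewrite big_split /= -mulr_sumr sum_cst; ring.
Qed.

Lemma sum_potts (B : R) (f : 'I_q -> 'I_q -> R) :
  \sum_i \sum_j (potts_mx q B i j * f i j) =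
  \sum_i \sum_j f i j + (B - 1) * \sum_i f i i.
Proof.
have E (i j : 'I_q) : (if i == j then B else 1) * f i j = f i j + (B - 1) * ((i == j)%:R * f i j).
  by case: eqP => _ /=; ring.
rewrite mulr_sumr -big_split /=; apply: eq_bigr => i _.
under eq_bigr => j _ do rewrite mxE E.
by rewrite big_split /= -mulr_sumr sum_deltaL.
Qed.
Lemma row_potts (B : R) (i : 'I_q) (f : 'I_q -> R) :
  \sum_j (potts_mx q B i j * f j) = \sum_j f j + (B - 1) * f i.
Proof.
have E (j : 'I_q) : (if i == j then B else 1) * f j = f j + (B - 1) * ((i == j)%:R * f j).
  by case: eqP => _ /=; ring.
under eq_bigr => j _ do rewrite mxE E.
by rewrite big_split /= -mulr_sumr sum_deltaL.
Qed.

Lemma col_potts (B : R) (j : 'I_q) (f : 'I_q -> R) :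
  \sum_i (potts_mx q B i j * f i) = \sum_i f i + (B - 1) * f j.
Proof.
have E (i : 'I_q) : (if i == j then B else 1) * f i = f i + (B - 1) * ((j == i)%:R * f i).
  by rewrite eq_sym; case: eqP => _ /=; ring.
under eq_bigr => i _ do rewrite mxE E.
by rewrite big_split /= -mulr_sumr sum_deltaL.
Qed.
End Sums.
Local Open Scope ereal_scope.
Lemma xlog_le (b x K : R) : (0 < K)%R -> (0 <= b)%R -> (0 <= x)%R ->
  xlog_term b x <= (x * ln K + b / K - x)%:E.
Proof.
move=> K0 b0 x0; rewrite /xlog_term.
have [->|xn0] := eqVneq x 0%R.
  by rewrite lee_fin mul0r add0r subr0 divr_ge0 // ltW.
have [->|bn0] := eqVneq b 0%R; first by rewrite leNye.
rewrite lee_fin.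
have xp : (0 < x)%R by rewrite lt_def xn0.
have bp : (0 < b)%R by rewrite lt_def bn0.
have wp : (0 < b / (x * K))%R by rewrite divr_gt0 // mulr_gt0.
have := ln_le_sub1 _ wp.
rewrite ln_div ?posrE // ?mulr_gt0 // lnM ?posrE // => H.
have := ler_wpM2l (ltW xp) H.
have -> : (x * (b / (x * K) - 1) = b / K - x)%R.
  by field; rewrite ?gt_eqF.
move=> H2; rewrite mulrBr. 
have : (x * ln b - x * ln x - x * ln K = x * (ln b - (ln x + ln K)))%R by ring.
move: H2; move: (x * _)%R => u H2 E. lra.
Qed.
Lemma xlog_eq (b y K : R) : (0 < K)%R -> (0 <= b)%R -> (0 < y)%R ->
  xlog_term b (b * y / K) = (b / K * (y * ln K - y * ln y))%:E.
Proof.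
move=> K0 b0 y0; rewrite /xlog_term.
have [->|bn0] := eqVneq b 0%R; first by rewrite !mul0r eqxx.
have bp : (0 < b)%R by rewrite lt_def bn0.
have xp : (0 < b * y / K)%R by rewrite divr_gt0 // mulr_gt0.
case: ifPn => [/eqP H|_]; first by move: xp; rewrite H ltxx.
congr (_%:E).
rewrite ln_div ?posrE ?mulr_gt0 // lnM ?posrE //.
by field; rewrite gt_eqF.
Qed.
Lemma negent_unif q : (0 < q)%N -> negent (@unif R q) = (- ln q%:R)%R.
Proof.
move=> q0; have qp : (0 < q%:R :> R)%R by rewrite ltr0n.
rewrite /negent /unif.
have -> : (((q%:R)^-1 == 0 :> R) = false)%R by rewrite invr_eq0 gt_eqF.
by rewrite sum_cst mulrA mulfV ?gt_eqF // mul1r lnV ?posrE.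
Qed.

Lemma psi_unif_le q Delta (B : R) : (0 < q)%N -> (0 <= B)%R -> (0 < q%:R - 1 + B)%R ->
  Psi1 Delta B (@unif R q) (@unif R q) <=
  ((Delta%:R - 1) * (- ln q%:R - ln q%:R) + Delta%:R * ln (q%:R * (q%:R - 1 + B)))%:E.
Proof.
move=> q0 B0 Z0.
have qp : (0 < q%:R :> R)%R by rewrite ltr0n.
have K0 : (0 < q%:R * (q%:R - 1 + B) :> R)%R by rewrite mulr_gt0.
apply: ub_ereal_sup => _ [x [x0 [rows cols]] <-].
rewrite /Psi1_obj negent_unif // EFinD !EFinM; apply: leeD2l.
apply: lee_wpmul2l; first by rewrite lee_fin ler0n.
apply: (@le_trans _ _ (\sum_i \sum_j (x i j * ln (q%:R * (q%:R - 1 + B)) + potts_mx q B i j / (q%:R * (q%:R - 1 + B)) - x i j)%:E)).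
  apply: lee_sum => i _; apply: lee_sum => j _; apply: xlog_le => //.
  by rewrite mxE; case: eqP.
under eq_bigr => i _ do rewrite sumEFin.
rewrite sumEFin lee_fin le_eqVlt; apply/orP; left; apply/eqP.
under eq_bigr => i _ do rewrite sumrB big_split /= -mulr_suml -mulr_suml rows.
rewrite sumrB big_split /= -!mulr_suml.
have -> : (\sum_(i < q) \sum_(j < q) potts_mx q B i j = q%:R * (q%:R - 1 + B))%R.
  have := @sum_potts q B (fun _ _ => 1%R).
  under eq_bigr => i _ do under eq_bigr => j _ do rewrite mulr1.
  move=> ->; rewrite !sum_cst; ring.
rewrite /unif sum_cst mulfV ?gt_eqF // mul1r mulfV ?gt_eqF //; ring.
Qed.
Lemma negent_pert q (s : 'I_q -> R) (k : R) : (0 < q)%N -> (\sum_i s i = 0)%R ->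
  (forall i, 0 < 1 + k * s i)%R ->
  negent (fun i => (1 + k * s i) / q%:R)%R =
  ((\sum_i (1 + k * s i) * ln (1 + k * s i)) / q%:R - ln q%:R)%R.
Proof.
move=> q0 hs hp; have qp : (0 < q%:R :> R)%R by rewrite ltr0n.
rewrite /negent.
have E i : ((if (1 + k * s i) / q%:R == 0 then 0 else (1 + k * s i) / q%:R * ln ((1 + k * s i) / q%:R)) =
   ((1 + k * s i) * ln (1 + k * s i) - (1 + k * s i) * ln q%:R) / q%:R)%R.
  rewrite gt_eqF ?divr_gt0 // ln_div ?posrE //; ring.
rewrite (eq_bigr _ (fun i _ => E i)) -mulr_suml sumrB -mulr_suml big_split /= sum_cst.
rewrite -mulr_sumr hs mulr0 addr0 mulr1; field; by rewrite gt_eqF.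
Qed.

Lemma final_real (qR D Z e S2 G1 G2 HB lq lK : R) : (3 <= qR -> 3 <= D -> 0 < Z -> 0 < e -> e < 1 -> 0 < S2 ->
  (1 + e) * (D * Z) < (1 - e) * (qR * (D - 1)) ->
  e ^+ 2 * S2 / (1 + e) <= G1 + G2 ->
  HB <= (e * (Z / qR)) ^+ 2 * (qR * S2) / (1 - e) ->
  (D - 1) * (- lq - lq) + D * lK <
  (D - 1) * (G1 / qR - lq + (G2 / qR - lq)) + D * (lK - HB / (qR * Z)))%R.
Proof.
move=> q3 D3 Z0 e0 e1 S0 key hG hH.
have qp : (0 < qR)%R by lra.
have Dp : (0 < D - 1)%R by lra.
have h1 : ((D - 1) / qR * (e ^+ 2 * S2 / (1 + e)) <= (D - 1) / qR * (G1 + G2))%R.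
  by apply: ler_wpM2l => //; rewrite divr_ge0 // ltW.
have h2 : (D / (qR * Z) * HB <= D / (qR * Z) * ((e * (Z / qR)) ^+ 2 * (qR * S2) / (1 - e)))%R.
  by apply: ler_wpM2l => //; rewrite divr_ge0 // ?mulr_ge0 // ltW //; lra.
have h3 : (0 < (D - 1) / qR * (e ^+ 2 * S2 / (1 + e)) - D / (qR * Z) * ((e * (Z / qR)) ^+ 2 * (qR * S2) / (1 - e)))%R.
  have -> : ((D - 1) / qR * (e ^+ 2 * S2 / (1 + e)) - D / (qR * Z) * ((e * (Z / qR)) ^+ 2 * (qR * S2) / (1 - e)) =
     e ^+ 2 * S2 * ((1 - e) * (qR * (D - 1)) - (1 + e) * (D * Z)) / (qR ^+ 2 * (1 + e) * (1 - e)))%R.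
    field. rewrite !gt_eqF //; lra.
  apply: divr_gt0; first by rewrite !mulr_gt0 ?exprn_gt0 // subr_gt0.
  by rewrite !mulr_gt0 ?exprn_gt0 //; lra.
have -> : ((D - 1) * (G1 / qR - lq + (G2 / qR - lq)) + D * (lK - HB / (qR * Z)) =
  (D - 1) * (- lq - lq) + D * lK + ((D - 1) / qR * (G1 + G2) - D / (qR * Z) * HB))%R.
  field. rewrite !gt_eqF //; lra.
rewrite ltrDl. lra.
Qed.
End S.
Theorem lemma27 (R : realType) (q Delta : nat) (B : R) :
  (3 <= q)%N -> (3 <= Delta)%N -> 0 <= B ->
  B < (Delta%:R - q%:R) / Delta%:R ->
  exists (a b : 'I_q -> R), is_prob a /\ is_prob b /\
    (Psi1 Delta B (@unif R q) (@unif R q) < Psi1 Delta B a b)%E.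
Proof.
move=> hq hD hB0 hBlt.
have q0 : (0 < q)%N by apply: leq_trans hq.
have q3 : (3 <= q%:R :> R) by rewrite (ler_nat R 3 q).
have D3 : (3 <= Delta%:R :> R) by rewrite (ler_nat R 3 Delta).
set qR : R := q%:R in q3 hBlt *.
set D : R := Delta%:R in D3 hBlt *.
have qp : 0 < qR by lra.
have Dp : 0 < D by lra.
have BD : B * D < D - qR by rewrite -ltr_pdivlMr.
pose Z := qR - 1 + B.
have Z0 : 0 < Z by rewrite /Z; lra.
have B1 : B < 1 by nra.
have Zq : Z <= qR by rewrite /Z; lra.
pose A := qR * (D - 1). pose C := D * Z.
have CA : C < A by rewrite /A /C /Z; nra.
have C0 : 0 < C by rewrite /C mulr_gt0.
pose e := (A - C) / (2 * (A + C)).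
have eAC : e * (A + C) = (A - C) / 2 by rewrite /e; field; rewrite gt_eqF //; lra.
have e0 : 0 < e by rewrite /e divr_gt0 //; lra.
have e1 : e < 1.
  have : e * (A + C) < 1 * (A + C) by rewrite mul1r eAC; lra.
  by rewrite ltr_pM2r //; lra.
have key : (1 + e) * (D * Z) < (1 - e) * (qR * (D - 1)).
  rewrite -/A -/C.
  have : (1 - e) * A - (1 + e) * C = (A - C) - e * (A + C) by ring.
  rewrite eAC; lra.
pose c := Z / qR.
have c0 : 0 < c by rewrite divr_gt0.
have c1 : c <= 1 by rewrite ler_pdivrMr // mul1r.
pose i0 : 'I_q := Ordinal q0.
pose s := fun i : 'I_q => ((i == i0)%:R - qR^-1 : R).
have sum_s : \sum_i s i = 0.
  by rewrite sumrB sum_delta sum_cst mulfV ?gt_eqF // subrr.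
have qi : 0 < qR^-1 <= 1/3.
  rewrite invr_gt0 qp /= mul1r lef_pV2 ?posrE //; lra.
have s_bd i : -1 <= s i <= 1.
  by rewrite /s; case: (i == i0) => /=; lra.
have d_bd i j : -1 <= s i - s j <= 1.
  by rewrite /s; case: (i == i0); case: (j == i0) => /=; lra.
pose S2 := \sum_i s i ^+ 2.
have S2p : 0 < S2.
  rewrite /S2 (bigD1 i0) //= ltr_pwDl ?sumr_ge0 // => [|i _]; last exact: sqr_ge0.
  rewrite /s eqxx /= exprn_gt0 //; lra.
have pa i : 1 - e <= 1 + e * s i <= 1 + e.
  have := s_bd i; move=> /andP[h1 h2]; apply/andP; split; nra.
have pb i : 1 - e <= 1 + (- e) * s i <= 1 + e.
  have := s_bd i; move=> /andP[h1 h2]; apply/andP; split; nra.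
pose a := fun i => (1 + e * s i) / qR.
pose b := fun i => (1 + (- e) * s i) / qR.
pose y := fun i j => 1 + e * c * (s i - s j).
have py i j : 1 - e <= y i j <= 1 + e.
  have := d_bd i j; move=> /andP[h1 h2].
  have h3 : - 1 <= c * (s i - s j) <= 1 by apply/andP; split; nra.
  move: h3 => /andP[h3 h4]; rewrite /y -mulrA; apply/andP; split; nra.
pose K := qR * Z.
have K0 : 0 < K by rewrite mulr_gt0.
pose x : 'M[R]_q := \matrix_(i, j) (potts_mx q B i j * y i j / K).
have pot0 i j : 0 <= potts_mx q B i j by rewrite mxE; case: eqP.
have prob_pert (k : R) : (forall i, 1 - e <= 1 + k * s i <= 1 + e) ->
    is_prob (fun i => (1 + k * s i) / qR).
  move=> hk; split.
    move=> i; rewrite divr_ge0 ?ltW //; have := hk i; lra.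
  rewrite -mulr_suml big_split /= sum_cst -mulr_sumr sum_s mulr0 addr0 mulr1.
  by rewrite mulfV ?gt_eqF.
exists a, b; split; first exact: prob_pert.
split; first exact: prob_pert.
have xin : couplings a b x.
  split; [|split].
  - move=> i j; rewrite mxE; apply: divr_ge0; last exact: ltW.
    apply: mulr_ge0 => //; have := py i j; lra.
  - move=> i; under eq_bigr => j _ do rewrite mxE.
    rewrite -mulr_suml row_potts /a /y.
    rewrite big_split /= -mulr_sumr sumrB sum_cst sum_cst sum_s subr0 subrr mulr0 addr0.
    rewrite /K /c /Z; field; rewrite !gt_eqF //; lra.
  - move=> j; under eq_bigr => i _ do rewrite mxE.
    rewrite -mulr_suml col_potts /b /y.
    rewrite big_split /= -mulr_sumr sumrB sum_cst sum_cst sum_s sub0r subrr mulr0 addr0.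
    rewrite /K /c /Z; field; rewrite !gt_eqF //; lra.
apply: (le_lt_trans (@psi_unif_le R q Delta B q0 hB0 Z0)).
apply: (@lt_le_trans _ _ (Psi1_obj Delta B a b x)); last first.
  by apply: ereal_sup_ubound; exists x.
have Ex i j : xlog_term (potts_mx q B i j) (x i j) =
    (potts_mx q B i j / K * (y i j * ln K - y i j * ln (y i j)))%:E.
  rewrite [x i j]mxE xlog_eq //; have := py i j; lra.
rewrite /Psi1_obj.
rewrite (eq_bigr (fun i => (\sum_j (potts_mx q B i j / K * (y i j * ln K - y i j * ln (y i j))))%:E)); last first.
  by move=> i _; rewrite -sumEFin; apply: eq_bigr => j _; exact: Ex.
rewrite sumEFin -EFinM -EFinD lte_fin.
have ha : negent a = (\sum_i (1 + e * s i) * ln (1 + e * s i)) / qR - ln qR.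
  apply: negent_pert => // i; have := pa i; lra.
have hb : negent b = (\sum_i (1 + (- e) * s i) * ln (1 + (- e) * s i)) / qR - ln qR.
  apply: negent_pert => // i; have := pb i; lra.
rewrite ha hb.
pose HB := \sum_i \sum_j (potts_mx q B i j * (y i j * ln (y i j))).
have Sy : \sum_i \sum_j y i j = qR * qR.
  rewrite /y; under eq_bigr => i _ do rewrite big_split /= -mulr_sumr.
  by rewrite big_split /= -mulr_sumr sumd // sum_cst sum_cst mulr0 addr0 mulr1.
have Syy : \sum_i y i i = qR.
  by rewrite /y; under eq_bigr => i _ do rewrite subrr mulr0 addr0; rewrite sum_cst mulr1.
have SPy : \sum_i \sum_j (potts_mx q B i j * y i j) = K.
  by rewrite sum_potts Sy Syy /K /Z; ring.
have E1 : \sum_i \sum_j (potts_mx q B i j / K * (y i j * ln K - y i j * ln (y i j))) =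
    ln K - HB / K.
  have : \sum_i \sum_j (potts_mx q B i j / K * (y i j * ln K - y i j * ln (y i j))) =
     (\sum_i \sum_j (potts_mx q B i j * y i j)) * (ln K / K) - HB / K.
    rewrite /HB !mulr_suml -sumrB; apply: eq_bigr => i _.
    rewrite !mulr_suml -sumrB; apply: eq_bigr => j _; ring.
  by rewrite SPy => ->; rewrite mulrA [K * _]mulrC -mulrA mulfV ?gt_eqF // mulr1.
rewrite E1.
apply: (@final_real R qR D Z e S2) => //.
- rewrite -big_split /=.
  have Eg i : e ^+ 2 / (1 + e) * s i ^+ 2 <= (1 + e * s i) * ln (1 + e * s i) + (1 + - e * s i) * ln (1 + - e * s i).
    have h1 := @hlow R e (1 + e * s i).
    have h2 := @hlow R e (1 + (- e) * s i).
    have ee : 0 <= e < 1 by apply/andP; split; lra.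
    have := h1 ee (pa i); have := h2 ee (pb i).
    have -> : (1 + - e * s i - 1) ^+ 2 / (2 * (1 + e)) = e ^+ 2 / (1 + e) * s i ^+ 2 / 2.
      field; lra.
    have -> : (1 + e * s i - 1) ^+ 2 / (2 * (1 + e)) = e ^+ 2 / (1 + e) * s i ^+ 2 / 2.
      field; lra.
    lra.
  apply: le_trans (ler_sum _ (fun i _ => Eg i)).
  by rewrite -mulr_sumr -/S2 mulrAC.
- have Eh i j : potts_mx q B i j * (y i j * ln (y i j)) <=
     potts_mx q B i j * ((e * c) * (s i - s j) + ((e * c) ^+ 2 / (2 * (1 - e))) * (s i - s j) ^+ 2).
    apply: ler_wpM2l => //.
    have ee : 0 <= e < 1 by apply/andP; split; lra.
    have := @hupp R e (y i j) ee (py i j).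
    have -> : (y i j - 1) + (y i j - 1) ^+ 2 / (2 * (1 - e)) =
       (e * c) * (s i - s j) + ((e * c) ^+ 2 / (2 * (1 - e))) * (s i - s j) ^+ 2.
      rewrite /y; field; lra.
    done.
  apply: le_trans (ler_sum _ (fun i _ => ler_sum _ (fun j _ => Eh i j))) _.
  rewrite sum_potts.
  rewrite [X in _ + (B - 1) * X]big1 ?mulr0 ?addr0; last first.
    by move=> i _; rewrite subrr expr0n /= !mulr0 addr0.
  under eq_bigr => i _ do rewrite big_split /= -mulr_sumr -mulr_sumr.
  rewrite big_split /= -mulr_sumr -mulr_sumr sumd // mulr0 add0r sumd2 //.
  rewrite -/S2 /c le_eqVlt; apply/orP; left; apply/eqP; rewrite -/qR; field; rewrite !gt_eqF //; lra.
Qed.
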